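(* Let $G$ be a graph with $n$ vertices and vertex degree sequence $d_1(G)\geq d_2(G)\geq \cdots \geq d_n(G)$, let $\mathcal{D}(G)$ be its double graph, and let $0\leq \alpha \leq 1$. Then $$S_{k}(A_{\alpha}(\mathcal{D}(G)))\leq \begin{cases} 4\sum_{i=1}^{k/2}d_i(G)+2(1-\alpha)S_k(A(G)), & \text{if } 1 < k< n \text{ is even};\\ 4\sum_{i=1}^{(k-1)/2}d_i(G)+2d_{(k+1)/2}(G)+2(1-\alpha)S_k(A(G)), & \text{if } 1 \leq k< n \text{ is odd};\\ 4\sum_{i=1}^{k/2}d_i(G), & \text{if } n \leq k\leq 2n \text{ is even};\\ 4\sum_{i=1}^{(k-1)/2}d_i(G)+2d_{(k+1)/2}(G), & \text{if } n \leq k\leq 2n \text{ is odd}. \end{cases}$$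
   Context: All graphs are simple and undirected. $A(G)$ is the adjacency matrix, $D(G)$ the diagonal degree matrix, and $A_{\alpha}(G)=\alpha D(G)+(1-\alpha)A(G)$. For a real symmetric matrix $M$ with eigenvalues $\lambda_1(M)\geq\cdots\geq\lambda_N(M)$, $S_k(M)=\sum_{i=1}^k\lambda_i(M)$. The double graph $\mathcal{D}(G)$ is obtained by taking two copies of $G$ and joining each vertex in one copy with the neighbors of the corresponding vertex in the other copy (so $A(\mathcal{D}(G))=\begin{pmatrix}1&1\\1&1\end{pmatrix}\otimes A(G)$). *)

(* Defs.v *)
From HB Require Import structures.
From mathcomp Require Import all_boot all_order all_algebra.
From mathcomp Require Import reals.
Set Implicit Arguments. Unset Strict Implicit. Unset Printing Implicit Defensive.
Import Order.TTheory GRing.Theory Num.Theory.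
Local Open Scope ring_scope.

(* A simple graph on vertex set 'I_n is a symmetric irreflexive e : rel 'I_n. *)

Definition deg (n : nat) (e : rel 'I_n) (i : 'I_n) : nat := #|[pred j | e i j]|.

Definition adjmx (R : nzRingType) (n : nat) (e : rel 'I_n) : 'M[R]_n :=
  \matrix_(i, j) (e i j)%:R.

Definition degmx (R : nzRingType) (n : nat) (e : rel 'I_n) : 'M[R]_n :=
  \matrix_(i, j) ((deg e i)%:R *+ (i == j)).

Definition Aalpha (R : nzRingType) (n : nat) (alpha : R) (e : rel 'I_n) : 'M[R]_n :=
  alpha *: degmx R e + (1 - alpha) *: adjmx R e.

(* The double graph D(G): vertex set 'I_(n + n) = two copies of 'I_n;
   (c, u) ~ (c', v) iff u ~ v in G (so A(D(G)) = [[1,1],[1,1]] (x) A(G)). *)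
Definition copy_of (n : nat) (x : 'I_(n + n)) : 'I_n :=
  match split x with inl a => a | inr b => b end.
Definition double_rel (n : nat) (e : rel 'I_n) : rel 'I_(n + n) :=
  fun x y => e (copy_of x) (copy_of y).

Definition is_eigvals (R : realFieldType) (m : nat) (M : 'M[R]_m) (s : seq R) : Prop :=
  sorted (fun x y => y <= x) s /\ char_poly M = \prod_(x <- s) ('X - x%:P).

Definition Ssum (R : realFieldType) (k : nat) (s : seq R) : R :=
  \sum_(i < k) nth 0 s i.

(* degree sequence d_1 >= ... >= d_n, 1-indexed: dseq e i = d_i(G) *)
Definition dseq (n : nat) (e : rel 'I_n) (i : nat) : nat :=
  nth 0%N (sort geq [seq deg e v | v <- enum 'I_n]) i.-1.

Definition dsum (n : nat) (e : rel 'I_n) (m : nat) : nat :=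
  \sum_(1 <= i < m.+1) dseq e i.

Definition bound64 (R : realFieldType) (n : nat) (e : rel 'I_n) (alpha : R)
    (k : nat) (SkA : R) : R :=
  if (k < n)%N then
    (if ~~ odd k then 4 * (dsum e k./2)%:R + 2 * (1 - alpha) * SkA
     else 4 * (dsum e k.-1./2)%:R + 2 * (dseq e k.+1./2)%:R + 2 * (1 - alpha) * SkA)
  else
    (if ~~ odd k then 4 * (dsum e k./2)%:R
     else 4 * (dsum e k.-1./2)%:R + 2 * (dseq e k.+1./2)%:R).

(* Main.v *)
Require Import Defs.
From HB Require Import structures.
From mathcomp Require Import all_boot all_order all_algebra.
From mathcomp Require Import reals.
From mathcomp Require Import complex perm ring lra.
Import Order.TTheory GRing.Theory Num.Theory.
Local Open Scope ring_scope.

Lemma quad_le (C : numClosedFieldType) N (M : 'M[C]_N) (x : 'I_N -> C) :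
  (forall a b, M a b = M b a) -> (forall a b, 0 <= M a b) ->
  \sum_a \sum_b x a * M a b * (x b)^* <= \sum_a (\sum_b M a b) * (x a * (x a)^*).
Proof.
move=> Ms M0.
have h1 : \sum_a \sum_b M a b * (x b * (x b)^*) = \sum_a \sum_b M a b * (x a * (x a)^*).
  by rewrite exchange_big; apply: eq_bigr => a _; apply: eq_bigr => b _; rewrite Ms.
have h2 : \sum_a \sum_b M a b * (x b * (x a)^*) = \sum_a \sum_b x a * M a b * (x b)^*.
  rewrite exchange_big; apply: eq_bigr => a _; apply: eq_bigr => b _; rewrite Ms.
  by rewrite mulrCA mulrA.
have E : \sum_a \sum_b M a b * ((x a - x b) * (x a - x b)^*) =
   2 * (\sum_a (\sum_b M a b) * (x a * (x a)^*) - \sum_a \sum_b x a * M a b * (x b)^*).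
  transitivity (\sum_a \sum_b M a b * (x a * (x a)^*) + \sum_a \sum_b M a b * (x b * (x b)^*)
     - \sum_a \sum_b M a b * (x b * (x a)^*) - \sum_a \sum_b x a * M a b * (x b)^*).
    rewrite -big_split -!sumrB /=; apply: eq_bigr => a _.
    rewrite -big_split -!sumrB /=; apply: eq_bigr => b _.
    rewrite rmorphB /=; ring.
  rewrite h1 h2; under [X in _ = 2 * (X - _)]eq_bigr do rewrite mulr_suml.
  ring.
have : 0 <= 2 * (\sum_a (\sum_b M a b) * (x a * (x a)^*) - \sum_a \sum_b x a * M a b * (x b)^*).
  rewrite -E; apply: sumr_ge0 => a _; apply: sumr_ge0 => b _.
  by apply: mulr_ge0 => //; apply: mul_conjC_ge0.
by rewrite pmulr_rge0 ?ltr0n // subr_ge0.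
Qed.

Lemma char_poly_conj (F : fieldType) n (P A : 'M[F]_n) :
  P \in unitmx -> char_poly (invmx P *m A *m P) = char_poly A.
Proof.
move=> Pu; rewrite /char_poly /char_poly_mx.
set Q := map_mx polyC P; set Qi := map_mx polyC (invmx P).
have QiQ : Qi *m Q = 1%:M by rewrite -map_mxM mulVmx // map_mx1.
have -> : 'X%:M - map_mx polyC (invmx P *m A *m P) = Qi *m ('X%:M - map_mx polyC A) *m Q.
  rewrite mulmxBr mulmxBl !map_mxM -/Q -/Qi; congr (_ - _).
  by rewrite scalar_mxC -mulmxA QiQ mulmx1.
have QQi : Q *m Qi = 1%:M by rewrite -map_mxM mulmxV // map_mx1.
by rewrite !det_mulmx mulrC mulrA -det_mulmx QQi det1 mul1r.
Qed.

Section Spec.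
Local Open Scope sesquilinear_scope.

Lemma real_rc (R : rcfType) (x : R) : (x%:C)%C \is Num.real.
Proof. by rewrite complex_real. Qed.

Lemma key_spectral (R : realType) N (M : 'M[R]_N) (s : seq R) k :
  (forall a b, M a b = M b a) -> (forall a b, 0 <= M a b) -> is_eigvals M s -> (k <= N)%N ->
  exists w : 'I_N -> R, (forall x, 0 <= w x <= 1) /\ \sum_x w x = k%:R /\
     Ssum k s <= \sum_x (\sum_y M x y) * w x.
Proof.
move=> Ms M0 [_ hs] hk.
set Mc := map_mx (real_complex R) M.
have Mce : forall a b, Mc a b = ((M a b)%:C)%C by move=> a b; rewrite mxE.
have Mct : Mc^t* = Mc.
  by apply/matrixP => a b; rewrite !mxE conj_Creal ?real_rc // Ms.
have Mn : Mc \is normalmx by rewrite qualifE Mct.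
set P := spectralmx Mc; set d := spectral_diag Mc.
have Peq : Mc = invmx P *m diag_mx d *m P by apply/orthomx_spectralP.
have PU : P \is unitarymx by apply: spectral_unitarymx.
have Pinv : invmx P = P^t* by apply: invmx_unitary.
have PPt : P *m P^t* = 1%:M by apply/unitarymxP.
have PtP : P^t* *m P = 1%:M by rewrite -Pinv mulVmx // unitarymx_unit.
have Dd : P *m Mc *m P^t* = diag_mx d.
  by rewrite Peq Pinv !mulmxA PPt mul1mx -mulmxA PPt mulmx1.
have dj : forall j, d 0 j = \sum_a \sum_b P j a * Mc a b * (P j b)^*.
  move=> j; have := Dd; move/matrixP/(_ j j); rewrite [in RHS]mxE eqxx mulr1n => <-.
  rewrite exchange_big mxE; apply: eq_bigr => b _; rewrite !mxE mulr_suml.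
  by [].
have cp1 : char_poly Mc = \prod_(x <- map (real_complex R) s) ('X - x%:P).
  rewrite -map_char_poly hs rmorph_prod big_map; apply: eq_bigr => x _.
  exact: map_polyXsubC.
set t := [tuple d 0 i | i < N].
have cp2 : char_poly Mc = \prod_(x <- t) ('X - x%:P).
  rewrite Peq char_poly_conj ?unitarymx_unit // char_poly_trig ?diag_mx_is_trig //.
  rewrite big_tuple; apply: eq_bigr => i _; by rewrite tnth_mktuple !mxE eqxx mulr1n.
have pe : perm_eq (map (real_complex R) s) t by apply: prod_XsubC_eq; rewrite -cp1 cp2.
have ss : size s = N by rewrite -(size_map (real_complex R)) (perm_size pe) size_tuple.
have [p hp] := tuple_permP pe.
have hpi : forall i : 'I_N, ((nth 0 s i)%:C)%C = d 0 (p i).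
  move=> i; rewrite -(nth_map 0 0 (real_complex R)) ?ss // hp -tnth_nth.
  by rewrite !tnth_mktuple.
pose W a := \sum_(i : 'I_N | (i < k)%N) P (p i) a * (P (p i) a)^*.
pose w a := complex.Re (W a).
have W0 : forall a, 0 <= W a.
  by move=> a; apply: sumr_ge0 => i _; apply: mul_conjC_ge0.
have Ww : forall a, W a = ((w a)%:C)%C.
  move=> a; have := ger0_Im (W0 a); rewrite /w; case: (W a) => x y /= -> //.
have Pcol : forall a, \sum_j P j a * (P j a)^* = 1.
  move=> a; have := PtP; move/matrixP/(_ a a); rewrite !mxE eqxx mulr1n => <-.
  by apply: eq_bigr => j _; rewrite !mxE mulrC.
have Prow : forall j, \sum_a P j a * (P j a)^* = 1.
  move=> j; have := PPt; move/matrixP/(_ j j); rewrite !mxE eqxx mulr1n => <-.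
  by apply: eq_bigr => a _; rewrite !mxE.
have W1 : forall a, W a <= 1.
  move=> a; rewrite -(Pcol a) (reindex_inj (@perm_inj _ p)) /=.
  rewrite [X in _ <= X](bigID (fun i : 'I_N => (i < k)%N)) /= lerDl.
  by apply: sumr_ge0 => i _; apply: mul_conjC_ge0.
have Wsum : \sum_a W a = k%:R.
  rewrite exchange_big /=.
  rewrite (eq_bigr (fun _ => 1)); last by move=> i _; rewrite Prow.
  by rewrite -(big_ord_widen _ (fun _ => 1) hk) sumr_const card_ord.
exists w; split; [|split].
- move=> a; have := W0 a; have := W1 a; rewrite Ww -lecR -[0]/((0%:C)%C) -[1]/((1%:C)%C).
  by rewrite !lecR => -> ->.
- apply: (@complexI R); rewrite rmorph_sum rmorph_nat -Wsum; apply: eq_bigr => a _; by rewrite Ww.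
have McS : forall a b, Mc a b = Mc b a by move=> a b; rewrite !Mce Ms.
have Mc0 : forall a b, 0 <= Mc a b.
  by move=> a b; rewrite Mce -[0]/((0%:C)%C) lecR.
rewrite -lecR /Ssum rmorph_sum (big_ord_widen N (fun i => ((nth 0 s i)%:C)%C) hk).
under eq_bigr => i _ do rewrite hpi dj.
apply: le_trans (ler_sum _ (fun i _ => @quad_le _ _ Mc (fun a => P (p i) a) McS Mc0)) _.
rewrite exchange_big rmorph_sum; rewrite le_eqVlt; apply/orP; left; apply/eqP; apply: eq_bigr => a _.
rewrite rmorphM rmorph_sum /= -Ww /W mulr_sumr.
have -> : \sum_(b < N) Mc a b = \sum_(b < N) ((M a b)%:C)%C by apply: eq_bigr => b _; rewrite Mce.
by [].
Qed.
End Spec.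

Lemma sorted_ge_nth (R : realFieldType) (s : seq R) i j :
  sorted (fun x y => y <= x) s -> (i <= j)%N -> (j < size s)%N -> nth 0 s j <= nth 0 s i.
Proof.
move=> ss ij js.
have tr : transitive (fun x y : R => y <= x) by move=> a b c h1 h2; apply: le_trans h2 h1.
apply: (sorted_leq_nth tr (fun x => lexx x) 0 ss) => //.
  by rewrite inE (leq_ltn_trans ij js).
Qed.

Lemma sorted_sum0 (R : realFieldType) (s : seq R) k :
  sorted (fun x y => y <= x) s -> \sum_(x <- s) x = 0 -> (k < size s)%N -> 0 <= Ssum k s.
Proof.
move=> ss s0 ks.
set t := nth 0 s k.
have E : \sum_(x <- s) x = Ssum k s + \sum_(k <= i < size s) nth 0 s i.
  rewrite (big_nth 0) (big_cat_nat (leq0n k) (ltnW ks)) /= big_mkord //.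
have h1 : k%:R * t <= Ssum k s.
  have -> : k%:R * t = \sum_(i < k) t by rewrite sumr_const card_ord mulr_natl.
  rewrite /Ssum; apply: ler_sum => i _.
  by apply: sorted_ge_nth => //; apply: ltnW.
have h2 : \sum_(k <= i < size s) nth 0 s i <= (size s - k)%:R * t.
  have -> : (size s - k)%:R * t = \sum_(k <= i < size s) t.
    by rewrite sumr_const_nat mulr_natl.
  apply: ler_sum_nat => i /andP[ki iN].
  by apply: sorted_ge_nth.
have hN : (size s)%:R = k%:R + (size s - k)%:R :> R by rewrite -natrD subnKC // ltnW.
have hk : 0 <= k%:R :> R by [].
have hd : 0 < (size s - k)%:R :> R by rewrite ltr0n subn_gt0.
rewrite s0 in E.
nra.
Qed.

Lemma copy_l n (u : 'I_n) : copy_of (lshift n u) = u.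
Proof.
rewrite /copy_of; have := unsplitK (inl _ u : 'I_n + 'I_n); rewrite /= => ->; done.
Qed.
Lemma copy_r n (u : 'I_n) : copy_of (rshift n u) = u.
Proof.
rewrite /copy_of; have := unsplitK (inr _ u : 'I_n + 'I_n); rewrite /= => ->; done.
Qed.

Lemma eig_size (R : realFieldType) m (M : 'M[R]_m) s : is_eigvals M s -> size s = m.
Proof.
case=> _ h; have := size_char_poly M; rewrite h (size_prod_XsubC _ id).
by case.
Qed.

Lemma eig_sum (R : realFieldType) m (M : 'M[R]_m) s :
  is_eigvals M s -> (0 < m)%N -> \sum_(x <- s) x = \tr M.
Proof.
move=> hs m0; have ss := eig_size _ _ _ _ hs; case: hs => _ h.
have := char_poly_trace M m0; rewrite h; have -> : m.-1 = (size s).-1 by rewrite ss.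
rewrite coefPn_prod_XsubC ?ss -?lt0n //.
by move/eqP; rewrite eqr_opp => /eqP.
Qed.

Lemma tr_adj (R : realFieldType) n (e : rel 'I_n) : irreflexive e -> \tr (adjmx R e) = 0.
Proof. by move=> ei; rewrite /mxtrace big1 // => i _; rewrite mxE ei. Qed.

Lemma deg_double n (e : rel 'I_n) x : deg (double_rel e) x = (2 * deg e (copy_of x))%N.
Proof.
rewrite /deg -!sum1_card big_split_ord /= mul2n -addnn.
congr (_ + _)%N; apply: eq_bigl => u; by rewrite !inE /double_rel ?copy_l ?copy_r.
Qed.

Lemma rowsum_A (R : realFieldType) n (e : rel 'I_n) (alpha : R) x :
  \sum_y Aalpha alpha (double_rel e) x y = (deg (double_rel e) x)%:R.
Proof.
have -> : \sum_y Aalpha alpha (double_rel e) x y =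
   alpha * \sum_y ((deg (double_rel e) x)%:R *+ (x == y)) +
   (1 - alpha) * \sum_y ((double_rel e x y)%:R).
  rewrite !mulr_sumr -big_split; apply: eq_bigr => y _; rewrite !mxE mulrnAr /=; done.
rewrite (bigD1 x) //= eqxx big1 ?addr0; last by move=> y /negbTE; rewrite eq_sym => ->.
have -> : \sum_y ((double_rel e x y)%:R : R) = (deg (double_rel e) x)%:R.
  rewrite -natr_sum; congr (_%:R); rewrite /deg -sum1_card.
  by rewrite [RHS]big_mkcond; apply: eq_bigr => y _; rewrite inE; case: (double_rel e x y).
rewrite /= mulr1n; ring.
Qed.

Lemma A_sym (R : realFieldType) n (e : rel 'I_n) (alpha : R) :
  symmetric e -> forall a b, Aalpha alpha (double_rel e) a b = Aalpha alpha (double_rel e) b a.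
Proof.
move=> es a b; rewrite !mxE eq_sym /double_rel es.
by case: (eqVneq b a) => [->|].
Qed.

Lemma A_ge0 (R : realFieldType) n (e : rel 'I_n) (alpha : R) :
  0 <= alpha -> alpha <= 1 -> forall a b, 0 <= Aalpha alpha (double_rel e) a b.
Proof.
move=> a0 a1 a b; rewrite !mxE; apply: addr_ge0; apply: mulr_ge0 => //.
- by apply: mulrn_wge0.
- by rewrite subr_ge0.
Qed.

Lemma dsumE n (e : rel 'I_n) m :
  dsum e m = (\sum_(i < m) nth 0%N (sort geq [seq deg e v | v <- enum 'I_n]) i)%N.
Proof. by rewrite /dsum big_add1 /= big_mkord. Qed.

Lemma comb_bound (R : realFieldType) n (e : rel 'I_n) (w : 'I_(n+n) -> R) k :
  (forall x, 0 <= w x <= 1) -> \sum_x w x = k%:R -> (k <= 2*n)%N ->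
  \sum_x (2 * deg e (copy_of x))%:R * w x <=
   (if ~~ odd k then 4 * (dsum e k./2)%:R
    else 4 * (dsum e k.-1./2)%:R + 2 * (dseq e k.+1./2)%:R).
Proof.
move=> w01 wsum hk.
set L := sort geq [seq deg e v | v <- enum 'I_n].
set m := k./2.
set t := nth 0%N L m.
have sL : size L = n by rewrite size_sort size_map size_enum_ord.
have hm : (m <= n)%N by rewrite /m; apply: leq_trans (half_leq hk) _; rewrite mul2n doubleK.
have sortL : sorted geq L by apply: sort_sorted => a b; apply: leq_total.
have geqL : forall i j, (i <= j)%N -> (j < n)%N -> (nth 0%N L j <= nth 0%N L i)%N.
  move=> i j ij jn.
  have tr : transitive geq by move=> a b c h1 h2; apply: leq_trans h2 h1.
  apply: (sorted_leq_nth tr (fun x => leqnn x) 0%N sortL) => //; rewrite inE sL //.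
  exact: leq_ltn_trans ij jn.
pose V u := w (lshift n u) + w (rshift n u).
have E1 : \sum_x (2 * deg e (copy_of x))%:R * w x = 2 * \sum_u (deg e u)%:R * V u.
  rewrite big_split_ord /= mulr_sumr -big_split /=; apply: eq_bigr => u _.
  by rewrite copy_l copy_r /V natrM; ring.
have Vsum : \sum_u V u = k%:R by rewrite -wsum big_split_ord /= -big_split.
have E2 : \sum_u (deg e u)%:R * V u <= \sum_u (2 * ((deg e u - t)%N)%:R + t%:R * V u).
  apply: ler_sum => u _; rewrite /V.
  have := w01 (lshift n u); have := w01 (rshift n u); case/andP => a1 a2; case/andP => b1 b2.
  case: (leqP t (deg e u)) => h.
    rewrite natrB //.
    have : 0 <= (deg e u)%:R - t%:R :> R by rewrite subr_ge0 ler_nat.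
    nra.
  have -> : (deg e u - t)%N = 0%N by apply/eqP; rewrite subn_eq0 ltnW.
  have : (deg e u)%:R - t%:R < 0 :> R by rewrite subr_lt0 ltr_nat.
  nra.
have E3 : (\sum_u (deg e u - t))%N = (\sum_(i < m) (nth 0%N L i - t))%N.
  have -> : (\sum_(u : 'I_n) (deg e u - t))%N = (\sum_(x <- [seq deg e v | v <- enum 'I_n]) (x - t))%N.
    by rewrite big_map big_enum.
  rewrite -(perm_big _ (permEl (perm_sort geq _))) -/L (big_nth 0%N) sL.
  rewrite (big_cat_nat (leq0n m) hm) /= [X in (_ + X)%N]big1_seq ?addn0 ?big_mkord //.
  move=> i /andP[_]; rewrite mem_index_iota => /andP[mi iN].
  by apply/eqP; rewrite subn_eq0; apply: geqL.
have E4 : (\sum_(i < m) (nth 0%N L i - t))%:R = (dsum e m)%:R - (m * t)%:R :> R.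
  have tle : forall i, (i < m)%N -> (t <= nth 0%N L i)%N.
    move=> i im; rewrite /t; case: (ltnP m n) => mn.
      by apply: geqL => //; apply: ltnW.
    by rewrite nth_default ?sL.
  rewrite dsumE -/L natr_sum natr_sum natrM.
  have -> : (m%:R * t%:R : R) = \sum_(i < m) (t%:R : R) by rewrite sumr_const card_ord mulr_natl.
  rewrite -sumrB; apply: eq_bigr => i _; rewrite natrB //; exact: tle.
have Ek : k%:R = (odd k)%:R + 2 * m%:R :> R.
  by rewrite -[k in LHS]odd_double_half natrD -muln2 natrM mulrC.
have main : \sum_x (2 * deg e (copy_of x))%:R * w x <=
    4 * (dsum e m)%:R + 2 * (odd k)%:R * t%:R.
  rewrite E1.
  have : \sum_u (deg e u)%:R * V u <= 2 * (dsum e m)%:R + (odd k)%:R * t%:R.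
    apply: (le_trans E2); rewrite big_split /= -mulr_sumr -mulr_sumr Vsum.
    rewrite -natr_sum E3 E4 Ek natrM; lra.
  lra.
apply: (le_trans main).
case: (boolP (odd k)) => ok /=.
  have hk' : k = (m.*2).+1 by rewrite -[k in LHS]odd_double_half ok add1n.
  have h1 : k.-1./2 = m by rewrite hk' /= doubleK.
  have h2 : uphalf k = m.+1 by rewrite hk' /= doubleK.
  rewrite h1 h2 /dseq /= -/L -/t; lra.
lra.
Qed.

Theorem theorem6p4 (R : realType) (n : nat) (e : rel 'I_n)
  (e_sym : symmetric e) (e_irr : irreflexive e)
  (alpha : R) (ha0 : 0 <= alpha) (ha1 : alpha <= 1)
  (k : nat) (hk1 : (1 <= k)%N) (hk2 : (k <= 2 * n)%N)
  (sD sA : seq R)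
  (hsD : is_eigvals (Aalpha alpha (double_rel e)) sD)
  (hsA : is_eigvals (adjmx R e) sA) :
  Ssum k sD <= bound64 e alpha k (Ssum k sA).
Proof.
have hN : (k <= n + n)%N by rewrite addnn -mul2n.
have [w [w01 [wsum hS]]] := key_spectral _ _ _ _ _ (A_sym _ _ e alpha e_sym)
   (A_ge0 _ _ e alpha ha0 ha1) hsD hN.
have hrow : \sum_x (\sum_y Aalpha alpha (double_rel e) x y) * w x =
    \sum_x (2 * deg e (copy_of x))%:R * w x.
  by apply: eq_bigr => x _; rewrite rowsum_A deg_double.
have hB := comb_bound _ _ e w k w01 wsum hk2.
rewrite hrow in hS.
have hle := le_trans hS hB.
rewrite /bound64; case: ifP => kn; last exact: hle.
have sAn : size sA = n := eig_size _ _ _ _ hsA.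
have n0 : (0 < n)%N by apply: leq_ltn_trans kn.
have s0 : \sum_(x <- sA) x = 0 by rewrite (eig_sum _ _ _ _ hsA n0) tr_adj.
have SA : 0 <= Ssum k sA by apply: sorted_sum0 => //; [exact: hsA.1 | rewrite sAn].
have h1 : 0 <= 2 * (1 - alpha) * Ssum k sA.
  by apply: mulr_ge0 => //; apply: mulr_ge0 => //; rewrite subr_ge0.
move: hle; case: (odd k) => /= hle; lra.
Qed.
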